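(* Consider the lattice Boltzmann scheme described in the context, viewed formally as depending on the single parameter $\Delta t\to0$ (with $\lambda$, $e_j$, $M$, $G$, $s_k$ fixed). Define the conservation defect $$\theta^k=\partial_t m^k_{\rm eq}+\sum_{\beta=1}^d\sum_{j=0}^J M^k_j v_j^\beta\,\partial_\beta f^j_{\rm eq}=\sum_{j=0}^J M^k_j\Big(\partial_t f^j_{\rm eq}+\sum_{\beta=1}^d v_j^\beta\partial_\beta f^j_{\rm eq}\Big),\quad 0\le k\le J.$$ Then for $d+1\le k\le J$, $$m^k=m^k_{\rm eq}-\frac{\Delta t}{s_k}\theta^k+O(\Delta t^2),\qquad m^k_*=m^k_{\rm eq}-\Big(\frac1{s_k}-1\Big)\Delta t\,\theta^k+O(\Delta t^2),$$ and for $0\le j\le J$, $1\le\beta\le d$, $$\partial_\beta f^j_*=\partial_\beta f^j_{\rm eq}-\Delta t\sum_{k=d+1}^J\Big(\frac1{s_k}-1\Big)(M^{-1})^j_k\,\partial_\beta\theta^k+O(\Delta t^2).$$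
   Context: Let $d\ge1$ be the space dimension, $J\ge d$ an integer, and $e_0,\dots,e_J\in\mathbb{R}^d$ fixed vectors. Let $\Delta x>0$, $\Delta t>0$ with $\lambda=\Delta x/\Delta t$ fixed, and set $v_j=\lambda e_j$, with components $v_j^\alpha$. Let $M=(M^k_j)_{0\le k,j\le J}$ be a fixed invertible real matrix with $M^0_j=1$ and $M^\alpha_j=v_j^\alpha$ for $1\le\alpha\le d$; $(M^{-1})^j_k$ denotes the entries of its inverse. Let $G:\mathbb{R}^{d+1}\to\mathbb{R}^{J+1}$ be a fixed smooth map with $\sum_j G^j(W)=W^0$ and $\sum_j v_j^\alpha G^j(W)=W^\alpha$. Let $s_k\in(0,2]$, $d+1\le k\le J$, be fixed. The scheme: densities $f^j(x,t)$; moments $m^k=\sum_j M^k_j f^j$; $\rho=m^0$, $q^\alpha=m^\alpha$, $W=(\rho,q^1,\dots,q^d)$; $f^j_{\rm eq}=G^j(W)$, $m^k_{\rm eq}=\sum_j M^k_j f^j_{\rm eq}$. Collision: $m^i_*=m^i$ for $0\le i\le d$, $m^k_*=(1-s_k)m^k+s_k m^k_{\rm eq}$ for $k\ge d+1$; $f^j_*=\sum_k (M^{-1})^j_k m^k_*$. Advection: $f^j(x,t+\Delta t)=f^j_*(x-v_j\Delta t,t)$. Here $\partial_\beta=\partial/\partial x_\beta$. Formal framework: all quantities are smooth functions of $(x,t)$ satisfying these relations identically and are expanded by Taylor's formula in $\Delta t$; $O(\Delta t^n)$ denotes a remainder of order $\Delta t^n$ as $\Delta t\to0$, derivatives of remainders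 being of the same order. *)

(* Defs.v *)
From HB Require Import structures.
From mathcomp Require Import all_boot all_order all_algebra.
From mathcomp Require Import all_classical all_reals all_analysis.
Set Implicit Arguments. Unset Strict Implicit. Unset Printing Implicit Defensive.
Import Order.TTheory GRing.Theory Num.Theory numFieldNormedType.Exports.
Local Open Scope ring_scope.

Section LBM.
Context {R : realType}.

Definition Dseq {V : normedModType R} (l : seq V) (F : V -> R) : V -> R :=
  foldr (fun u g => 'D_u g) F l.

Definition smooth {V : normedModType R} (F : V -> R) : Prop :=
  forall (l : seq V) (p : V), differentiable (Dseq l F) p.

Context (d J : nat).

Definition ST := ('rV[R]_d * R)%type.

Definition dT (F : ST -> R) (p : ST) : R := 'D_((0 : 'rV[R]_d), (1 : R)) F p.
Definition dX (b : 'I_d) (F : ST -> R) (p : ST) : R :=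
  'D_((delta_mx 0 b : 'rV[R]_d), (0 : R)) F p.

(* r = O(dt^n) as dt -> 0+, uniformly in (x,t), together with all its
   derivatives (of every order) *)
Definition LBMO (n : nat) (r : R -> ST -> R) : Prop :=
  forall l : seq ST, exists C : R, exists delta : R, 0 < delta /\
    forall dt : R, 0 < dt -> dt < delta ->
      forall p : ST, `|Dseq l (r dt) p| <= C * dt ^+ n.

Context (lam : R) (e : 'I_J.+1 -> 'rV[R]_d) (M : 'M[R]_J.+1)
        (G : 'rV[R]_d.+1 -> 'I_J.+1 -> R) (s : 'I_J.+1 -> R).

Definition vel (j : 'I_J.+1) : 'rV[R]_d := lam *: e j.

Section Fields.
Variable f : 'I_J.+1 -> ST -> R.

Definition mom (k : 'I_J.+1) (p : ST) : R := \sum_(j < J.+1) M k j * f j p.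
Definition Wof (p : ST) : 'rV[R]_d.+1 := \row_(i < d.+1) mom (inord i) p.
Definition feq (j : 'I_J.+1) (p : ST) : R := G (Wof p) j.
Definition meq (k : 'I_J.+1) (p : ST) : R := \sum_(j < J.+1) M k j * feq j p.
Definition mstar (k : 'I_J.+1) (p : ST) : R :=
  if (k <= d)%N then mom k p else (1 - s k) * mom k p + s k * meq k p.
Definition fstar (j : 'I_J.+1) (p : ST) : R :=
  \sum_(k < J.+1) invmx M j k * mstar k p.
Definition theta (k : 'I_J.+1) (p : ST) : R :=
  \sum_(j < J.+1) M k j *
     (dT (feq j) p + \sum_(b < d) (vel j) 0 b * dX b (feq j) p).
End Fields.

Definition scheme (dt : R) (f : 'I_J.+1 -> ST -> R) : Prop :=
  forall (j : 'I_J.+1) (x : 'rV[R]_d) (t : R),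
    f j (x, t + dt) = fstar f j (x - dt *: vel j, t).

End LBM.

(* Main.v *)
Require Import Defs.
From HB Require Import structures.
From mathcomp Require Import all_boot all_order all_algebra.
From mathcomp Require Import all_classical all_reals all_analysis.
From mathcomp Require Import ring lra.
Import Order.TTheory GRing.Theory Num.Theory numFieldNormedType.Exports.
Local Open Scope classical_set_scope.
Local Open Scope ring_scope.

Require Import Defs.
From HB Require Import structures.
From mathcomp Require Import all_boot all_order all_algebra.
From mathcomp Require Import all_classical all_reals all_analysis.
Import Order.TTheory GRing.Theory Num.Theory numFieldNormedType.Exports.
Local Open Scope ring_scope.
Section Gen.
Context {R : realType} {V : normedModType R}.
Implicit Types (F H : V -> R) (u w a p q : V).

Lemma Dseq_cons u l F : Dseq (u :: l) F = 'D_u (Dseq l F).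
Proof. by []. Qed.

Lemma Dseq_rcons l u F : Dseq (rcons l u) F = Dseq l ('D_u F).
Proof. by elim: l => //= x l ->. Qed.

Lemma derive_trans F a u : 'D_u (fun p => F (p + a)) = fun p => 'D_u F (p + a).
Proof.
apply/funext => p; rewrite /derive /=; do 2 f_equal.
by apply/funext => h /=; rewrite addrA.
Qed.

Lemma Dseq_trans l F a : Dseq l (fun p => F (p + a)) = fun p => Dseq l F (p + a).
Proof. by elim: l => //= u l ->; rewrite derive_trans. Qed.

Lemma diff_trans F a p : differentiable F (p + a) -> differentiable (fun q => F (q + a)) p.
Proof.
move=> dF.
have hd : differentiable (fun q : V => q + a) p.
  have -> : (fun q : V => q + a) = (id : V -> V) + cst a by [].
  apply: differentiableD => //; exact: differentiable_cst.
exact: (differentiable_comp hd dF).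
Qed.

Lemma smooth_trans F a : smooth F -> smooth (fun p => F (p + a)).
Proof. by move=> sF l p; rewrite Dseq_trans; apply: diff_trans; apply: sF. Qed.

Lemma smooth_D u F : smooth F -> smooth ('D_u F).
Proof. by move=> sF l p; rewrite -Dseq_rcons; apply: sF. Qed.

Lemma smooth_diff F p : smooth F -> differentiable F p.
Proof. by move=> sF; apply: (sF [::]). Qed.

Lemma smooth_derivable F p u : smooth F -> derivable F p u.
Proof. by move=> sF; apply: diff_derivable; apply: smooth_diff. Qed.

Lemma derive_add F H u : (forall p, derivable F p u) -> (forall p, derivable H p u) ->
  'D_u (fun p => F p + H p) = fun p => 'D_u F p + 'D_u H p.
Proof.
move=> dF dH; apply/funext => p.
by rewrite -[(fun p => F p + H p)]/(F + H) deriveD.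
Qed.

Lemma derive_scale F c u : (forall p, derivable F p u) ->
  'D_u (fun p => c * F p) = fun p => c * 'D_u F p.
Proof.
move=> dF; apply/funext => p.
by rewrite -[(fun p => c * F p)]/(c \*: F) deriveZ.
Qed.

Lemma smooth_Dseq_add F H l : smooth F -> smooth H ->
  Dseq l (fun p => F p + H p) = fun p => Dseq l F p + Dseq l H p.
Proof.
move=> sF sH; elim: l => //= u l ->.
by apply: derive_add => p; apply: diff_derivable; [apply: sF | apply: sH].
Qed.

Lemma smooth_add F H : smooth F -> smooth H -> smooth (fun p => F p + H p).
Proof.
move=> sF sH l p; rewrite smooth_Dseq_add //.
by apply: (@differentiableD _ _ _ (Dseq l F) (Dseq l H)); [apply: sF | apply: sH].
Qed.

Lemma smooth_Dseq_scale F c l : smooth F ->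
  Dseq l (fun p => c * F p) = fun p => c * Dseq l F p.
Proof.
move=> sF; elim: l => //= u l ->.
by apply: derive_scale => p; apply: diff_derivable; apply: sF.
Qed.

Lemma smooth_scale F c : smooth F -> smooth (fun p => c * F p).
Proof.
move=> sF l p; rewrite smooth_Dseq_scale //.
exact: (@differentiableZ _ _ _ (Dseq l F) c p (sF l p)).
Qed.

Lemma Dseq_cst l c : Dseq l (fun _ : V => c) = fun _ => (if l is [::] then c else 0).
Proof.
elim: l => //= u l ->; apply/funext => p.
by rewrite -[(fun _ => _)]/(cst (if l is [::] then c else 0 : R)) derive_cst.
Qed.

Lemma smooth_cst c : smooth (fun _ : V => c).
Proof. by move=> l p; rewrite Dseq_cst; exact: differentiable_cst. Qed.

Lemma smooth_sum_Dseq_sum n (Fs : 'I_n -> V -> R) : (forall i, smooth (Fs i)) ->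
  smooth (fun p => \sum_(i < n) Fs i p) /\ forall l,
  Dseq l (fun p => \sum_(i < n) Fs i p) = fun p => \sum_(i < n) Dseq l (Fs i) p.
Proof.
elim: n Fs => [|n IH] Fs sF.
  have E : (fun p : V => \sum_(i < 0) Fs i p) = fun _ => 0.
    by apply/funext => p; rewrite big_ord0.
  rewrite E; split; first exact: smooth_cst.
  move=> l; rewrite Dseq_cst; apply/funext => p; rewrite big_ord0; by case: l.
have E : (fun p : V => \sum_(i < n.+1) Fs i p) =
   fun p => (\sum_(i < n) Fs (widen_ord (leqnSn n) i) p) + Fs ord_max p.
  by apply/funext => p; rewrite big_ord_recr.
have [s1 d1] := IH (fun i => Fs (widen_ord (leqnSn n) i)) (fun i => sF _).
rewrite E; split; first exact: smooth_add.
move=> l; rewrite smooth_Dseq_add // d1; apply/funext => p.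
by rewrite big_ord_recr.
Qed.

Lemma smooth_sum n (Fs : 'I_n -> V -> R) : (forall i, smooth (Fs i)) ->
  smooth (fun p => \sum_(i < n) Fs i p).
Proof. by move=> h; case: (@smooth_sum_Dseq_sum n Fs h). Qed.

Lemma smooth_Dseq_sum n (Fs : 'I_n -> V -> R) l : (forall i, smooth (Fs i)) ->
  Dseq l (fun p => \sum_(i < n) Fs i p) = fun p => \sum_(i < n) Dseq l (Fs i) p.
Proof. by move=> h; case: (@smooth_sum_Dseq_sum n Fs h). Qed.

Lemma smooth_Dseq_opp F l : smooth F ->
  Dseq l (fun p => - F p) = fun p => - Dseq l F p.
Proof.
move=> sF; have -> : (fun p => - F p) = fun p => (-1) * F p.
  by apply/funext => p; rewrite mulN1r.
by rewrite smooth_Dseq_scale //; apply/funext => p; rewrite mulN1r.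
Qed.

Lemma smooth_opp F : smooth F -> smooth (fun p => - F p).
Proof.
move=> sF; have -> : (fun p => - F p) = fun p => (-1) * F p.
  by apply/funext => p; rewrite mulN1r.
exact: smooth_scale.
Qed.

Lemma smooth_Dseq_sub F H l : smooth F -> smooth H ->
  Dseq l (fun p => F p - H p) = fun p => Dseq l F p - Dseq l H p.
Proof.
by move=> sF sH; rewrite smooth_Dseq_add ?smooth_Dseq_opp //; apply: smooth_opp.
Qed.

Lemma smooth_sub F H : smooth F -> smooth H -> smooth (fun p => F p - H p).
Proof. by move=> sF sH; apply: smooth_add => //; apply: smooth_opp. Qed.

End Gen.


Section MVTb.
Context {R : realType}.

Lemma mvt_bound (phi dphi : R -> R) (t c K : R) : 0 <= t ->
  (forall x, 0 <= x <= t -> is_derive x 1 phi (dphi x)) ->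
  (forall x, 0 <= x <= t -> `|dphi x - c| <= K) ->
  `|phi t - phi 0 - c * t| <= K * t.
Proof.
rewrite le_eqVlt => /orP [/eqP <-|t0] hd hK.
  by rewrite subrr mulr0 sub0r normrN normr0 mulr0.
pose psi := phi - c \*: (@id R).
have hpsi x : 0 <= x <= t -> is_derive x 1 psi (dphi x - c).
  move=> hx; have := hd x hx => H.
  have -> : dphi x - c = dphi x - c *: (1 : R) by rewrite /GRing.scale /= mulr1.
  by apply: is_deriveB; apply: is_deriveZ; apply: is_derive_id.
have hin x : x \in `]0, t[ -> 0 <= x <= t.
  by rewrite in_itv /= => /andP [a b]; rewrite !ltW.
have hcont : {within `[0, t], continuous psi}.
  apply: derivable_within_continuous => x.
  rewrite in_itv /= => hx; have := hpsi x hx; by case.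
have [x0 x0in E] := @MVT R psi (fun x => dphi x - c) 0 t t0
  (fun x hx => hpsi x (hin x hx)) hcont.
have -> : phi t - phi 0 - c * t = psi t - psi 0.
  have -> : psi = fun x => phi x - c * x by []. rewrite /=; ring.
rewrite E subr0 normrM (gtr0_norm t0); apply: ler_wpM2r; [exact: ltW| apply: hK; exact: hin].
Qed.
End MVTb.


Section Sch.
Context {R : realType} {V : normedModType R}.
Implicit Types (F H : V -> R) (u w a p q : V).

Lemma slice_derive F q u x : derivable F (q + x *: u) u ->
  is_derive x 1 (fun y : R => F (q + y *: u)) ('D_u F (q + x *: u)).
Proof.
move=> dF.
have E : (fun h : R => h^-1 *: (((fun y : R => F (q + y *: u)) \o shift x) (h *: 1)
            - F (q + x *: u)))
       = (fun h : R => h^-1 *: ((F \o shift (q + x *: u)) (h *: u) - F (q + x *: u))).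
  apply/funext => h /=; congr (_ *: (F _ - _)).
  by rewrite -[h *: 1]/(h * 1) mulr1 scalerDl addrCA.
apply: DeriveDef; first by rewrite /derivable E.
by rewrite /derive E.
Qed.

Lemma taylor1 F u p t C : smooth F -> 0 <= t -> (forall q, `|'D_u F q| <= C) ->
  `|F (p + t *: u) - F p| <= C * t.
Proof.
move=> sF t0 hC.
have := @mvt_bound R (fun y => F (p + y *: u)) (fun y => 'D_u F (p + y *: u)) t 0 C t0.
rewrite /= scale0r addr0 mul0r subr0; apply.
  by move=> x _; apply: slice_derive; apply: smooth_derivable.
by move=> x _; rewrite subr0.
Qed.

Lemma taylor2 F u p t C : smooth F -> 0 <= t ->
  (forall q, `|'D_u ('D_u F) q| <= C) ->
  `|F (p + t *: u) - F p - t * 'D_u F p| <= C * t * t.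
Proof.
move=> sF t0 hC.
have C0 : 0 <= C by apply: le_trans (hC p).
have := @mvt_bound R (fun y => F (p + y *: u)) (fun y => 'D_u F (p + y *: u)) t
  ('D_u F p) (C * t) t0.
rewrite /= scale0r addr0 (mulrC ('D_u F p)); apply.
  by move=> x _; apply: slice_derive; apply: smooth_derivable.
move=> x /andP [x0 xt].
apply: (le_trans (@taylor1 ('D_u F) u p x C (smooth_D u F sF) x0 hC)).
by apply: ler_wpM2l.
Qed.

Lemma sq_bound F u w p t B eps : smooth F -> 0 <= t ->
  (forall s r, 0 <= s <= t -> 0 <= r <= t ->
     `|'D_w ('D_u F) (p + s *: u + r *: w) - B| <= eps) ->
  `|F (p + t *: u + t *: w) - F (p + t *: u) - F (p + t *: w) + F p - B * t * t|
    <= eps * t * t.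
Proof.
move=> sF t0 hB.
have h1 s : 0 <= s <= t ->
   `|'D_u F (p + s *: u + t *: w) - 'D_u F (p + s *: u) - B * t| <= eps * t.
  move=> hs.
  have := @mvt_bound R (fun r => 'D_u F (p + s *: u + r *: w))
     (fun r => 'D_w ('D_u F) (p + s *: u + r *: w)) t B eps t0.
  rewrite /= scale0r addr0; apply.
    by move=> x _; apply: slice_derive; apply: smooth_derivable; apply: smooth_D.
  by move=> x hx; apply: hB.
have := @mvt_bound R (fun s => F (p + t *: w + s *: u) - F (p + s *: u))
   (fun s => 'D_u F (p + t *: w + s *: u) - 'D_u F (p + s *: u)) t (B * t) (eps * t) t0.
rewrite /= !scale0r !addr0.
have -> : p + t *: w + t *: u = p + t *: u + t *: w by rewrite addrAC.
have -> : F (p + t *: u + t *: w) - F (p + t *: u) - (F (p + t *: w) - F p) - B * t * t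
   = F (p + t *: u + t *: w) - F (p + t *: u) - F (p + t *: w) + F p - B * t * t.
  by ring.
apply.
  move=> x _; apply: is_deriveB; apply: slice_derive; apply: smooth_derivable => //.
move=> x hx; have -> : p + t *: w + x *: u = p + x *: u + t *: w by rewrite addrAC.
by apply: h1.
Qed.

End Sch.


Section Sch2.
Context {R : realType} {V : normedModType R}.
Implicit Types (F H : V -> R) (u w a p q : V).

Lemma near_bound (g : V -> R) p eps : differentiable g p -> 0 < eps ->
  exists2 r : R, 0 < r & forall q, `|p - q| < r -> `|g q - g p| <= eps.
Proof.
move=> dg e0.
have := differentiable_continuous dg.
move=> /cvgrPdist_le /(_ eps e0) /nbhs_ballP [r r0 hr].
exists r => // q hq; rewrite distrC; apply: hr.
by rewrite -ball_normE /ball_ /=.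
Qed.

Lemma schwarz F u w p : smooth F -> 'D_u ('D_w F) p = 'D_w ('D_u F) p.
Proof.
move=> sF.
set A := 'D_u ('D_w F) p; set B := 'D_w ('D_u F) p.
have dA : differentiable ('D_u ('D_w F)) p by apply: (sF [:: u; w]).
have dB : differentiable ('D_w ('D_u F)) p by apply: (sF [:: w; u]).
suff : `|A - B| <= 0 by rewrite normr_le0 subr_eq0 => /eqP.
apply/ler_addgt0Pr => e e0; rewrite add0r.
have e20 : 0 < e / 2 by rewrite divr_gt0.
have [r1 r10 h1] := near_bound _ _ _ dA e20.
have [r2 r20 h2] := near_bound _ _ _ dB e20.
set r := Num.min r1 r2.
have r0 : 0 < r by rewrite lt_min r10 r20.
set N := `|u| + `|w| + 1.
have N0 : 0 < N by rewrite /N ltr_pwDr // addr_ge0.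
set t := r / N.
have t0 : 0 < t by rewrite divr_gt0.
have near s1 s2 (x y : V) : 0 <= s1 <= t -> 0 <= s2 <= t ->
    `|p - (p + s1 *: x + s2 *: y)| <= t * (`|x| + `|y|).
  move=> /andP [a1 b1] /andP [a2 b2].
  rewrite -addrA opprD addrA subrr sub0r normrN.
  apply: (le_trans (ler_normD _ _)).
  rewrite !normrZ !ger0_norm // mulrDr.
  by apply: lerD; apply: ler_wpM2r.
have nearlt (x y : V) : `|x| + `|y| <= `|u| + `|w| -> t * (`|x| + `|y|) < r.
  move=> hxy; apply: (le_lt_trans (ler_wpM2l (ltW t0) hxy)).
  rewrite /t mulrAC ltr_pdivrMr // ltr_pM2l // /N.
  by rewrite ltrDl.
have hB s1 s2 : 0 <= s1 <= t -> 0 <= s2 <= t ->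
   `|'D_w ('D_u F) (p + s1 *: u + s2 *: w) - B| <= e / 2.
  move=> hs1 hs2; apply: h2.
  apply: (le_lt_trans (near _ _ _ _ hs1 hs2)).
  apply: (lt_le_trans (nearlt _ _ (lexx _))).
  by rewrite /r ge_min lexx orbT.
have hA s1 s2 : 0 <= s1 <= t -> 0 <= s2 <= t ->
   `|'D_u ('D_w F) (p + s1 *: w + s2 *: u) - A| <= e / 2.
  move=> hs1 hs2; apply: h1.
  apply: (le_lt_trans (near _ _ _ _ hs1 hs2)).
  apply: (lt_le_trans (nearlt _ _ _)); last by rewrite /r ge_min lexx.
  by rewrite addrC.
have S1 := sq_bound _ _ _ _ _ _ _ sF (ltW t0) hB.
have S2 := sq_bound _ _ _ _ _ _ _ sF (ltW t0) hA.
have E : p + t *: w + t *: u = p + t *: u + t *: w by rewrite addrAC.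
rewrite E in S2.
set D := F (p + t *: u + t *: w) - F (p + t *: u) - F (p + t *: w) + F p in S1.
have S2' : `|D - A * t * t| <= e / 2 * t * t.
  have -> : D = F (p + t *: u + t *: w) - F (p + t *: w) - F (p + t *: u) + F p.
    by rewrite /D; ring.
  exact: S2.
have tt0 : 0 < t * t by rewrite mulr_gt0.
have : `|A - B| * (t * t) <= e * (t * t).
  rewrite -(ger0_norm (ltW tt0)) -normrM.
  have -> : (A - B) * (t * t) = (D - B * t * t) - (D - A * t * t) by ring.
  apply: (le_trans (ler_normB _ _)).
  have -> : e * `|t * t| = e / 2 * t * t + e / 2 * t * t.
    by rewrite (ger0_norm (ltW tt0)) -mulrDl -mulrDl -splitr mulrA.
  apply: lerD. exact S1. exact S2'.
move=> H; rewrite -(ler_pM2r tt0); exact H.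
Qed.

Lemma Dseq_cat l1 l2 F : Dseq (l1 ++ l2) F = Dseq l1 (Dseq l2 F).
Proof. by rewrite /Dseq foldr_cat. Qed.

Lemma smooth_Dseq l F : smooth F -> smooth (Dseq l F).
Proof. by move=> sF l' p; rewrite -Dseq_cat; apply: sF. Qed.

Lemma Dseq_D_comm F l w : smooth F -> Dseq l ('D_w F) = 'D_w (Dseq l F).
Proof.
move=> sF; elim: l => //= u l ->.
apply/funext => p; apply: schwarz; exact: smooth_Dseq.
Qed.
End Sch2.


Set Implicit Arguments. Unset Strict Implicit.
Section GoodS.
Context {R : realType} (d : nat).
Local Notation V := (@ST R d).
Implicit Types (r : R -> V -> R).

Definition Good n r := (forall dt, 0 < dt -> smooth (r dt)) /\ LBMO n r.

Lemma Good_ext n r r' : (forall dt, 0 < dt -> r dt = r' dt) -> Good n r -> Good n r'.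
Proof.
move=> E [sr Lr]; split; first by move=> dt dt0; rewrite -E //; apply: sr.
move=> l; have [C [del [del0 H]]] := Lr l.
exists C, del; split => // dt dt0 dtd p; rewrite -E //; exact: H.
Qed.

Lemma Good_add n r1 r2 : Good n r1 -> Good n r2 ->
  Good n (fun dt p => r1 dt p + r2 dt p).
Proof.
move=> [s1 L1] [s2 L2]; split.
  by move=> dt dt0; apply: smooth_add; [apply: s1|apply: s2].
move=> l; have [C1 [d1 [d10 H1]]] := L1 l; have [C2 [d2 [d20 H2]]] := L2 l.
exists (C1 + C2), (Num.min d1 d2); split; first by rewrite lt_min d10 d20.
move=> dt dt0; rewrite lt_min => /andP [dt1 dt2] p.
rewrite smooth_Dseq_add; [|exact: s1|exact: s2].
rewrite mulrDl; apply: (le_trans (ler_normD _ _)).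
by apply: lerD; [apply: H1|apply: H2].
Qed.

Lemma Good_scale n r c : Good n r -> Good n (fun dt p => c * r dt p).
Proof.
move=> [s1 L1]; split; first by move=> dt dt0; apply: smooth_scale; apply: s1.
move=> l; have [C1 [d1 [d10 H1]]] := L1 l.
exists (`|c| * C1), d1; split => // dt dt0 dtd p.
rewrite smooth_Dseq_scale; last exact: s1.
rewrite normrM -mulrA; apply: ler_wpM2l => //; exact: H1.
Qed.

Lemma Good_opp n r : Good n r -> Good n (fun dt p => - r dt p).
Proof.
move=> h; apply: Good_ext (Good_scale (-1) h) => dt _.
by apply/funext => p; rewrite mulN1r.
Qed.

Lemma Good_sub n r1 r2 : Good n r1 -> Good n r2 ->
  Good n (fun dt p => r1 dt p - r2 dt p).
Proof. by move=> h1 h2; apply: Good_add h1 (Good_opp h2). Qed.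

Lemma Good_dt n r : Good n r -> Good n.+1 (fun dt p => dt * r dt p).
Proof.
move=> [s1 L1]; split; first by move=> dt dt0; apply: smooth_scale; apply: s1.
move=> l; have [C1 [d1 [d10 H1]]] := L1 l.
exists C1, d1; split => // dt dt0 dtd p.
rewrite smooth_Dseq_scale; last exact: s1.
rewrite normrM (gtr0_norm dt0) exprS mulrCA; apply: ler_wpM2l; first exact: ltW.
exact: H1.
Qed.

Lemma Good_zero n : Good n (fun _ _ => 0).
Proof.
split; first by move=> dt _; apply: smooth_cst.
move=> l; exists 0, 1; split => // dt dt0 _ p.
rewrite Dseq_cst mul0r; case: l => [|? ?] /=; by rewrite normr0 lexx.
Qed.

Lemma Good_sum n m (rs : 'I_m -> R -> V -> R) : (forall i, Good n (rs i)) ->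
  Good n (fun dt p => \sum_(i < m) rs i dt p).
Proof.
elim: m rs => [|m IH] rs h.
  apply: Good_ext (Good_zero n) => dt _; apply/funext => p; by rewrite big_ord0.
have := Good_add (IH (fun i => rs (widen_ord (leqnSn m) i)) (fun i => h _)) (h ord_max).
apply: Good_ext => dt _; apply/funext => p; by rewrite big_ord_recr.
Qed.

Lemma Good_D n r u : Good n r -> Good n (fun dt => 'D_u (r dt)).
Proof.
move=> [s1 L1]; split; first by move=> dt dt0; apply: smooth_D; apply: s1.
move=> l; have [C1 [d1 [d10 H1]]] := L1 (rcons l u).
exists C1, d1; split => // dt dt0 dtd p; rewrite -Dseq_rcons; exact: H1.
Qed.

Lemma Good1_diff r w : Good 0 r -> Good 1 (fun dt p => r dt (p + dt *: w) - r dt p).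
Proof.
move=> [s1 L1]; split.
  move=> dt dt0; apply: smooth_sub; [apply: smooth_trans|]; exact: s1.
move=> l; have [C1 [d1 [d10 H1]]] := L1 (w :: l).
exists C1, d1; split => // dt dt0 dtd p.
rewrite smooth_Dseq_sub; [|apply: smooth_trans; exact: s1|exact: s1].
rewrite Dseq_trans expr1.
apply: taylor1; [exact: smooth_Dseq (s1 _ dt0)|exact: ltW|].
move=> q; have := H1 dt dt0 dtd q; by rewrite expr0 mulr1.
Qed.

Lemma Good2_taylor r w : Good 0 r ->
  Good 2 (fun dt p => dt * 'D_w (r dt) p - (r dt (p + dt *: w) - r dt p)).
Proof.
move=> [s1 L1]; split.
  move=> dt dt0; apply: smooth_sub.
    by apply: smooth_scale; apply: smooth_D; exact: s1.
  apply: smooth_sub; [apply: smooth_trans|]; exact: s1.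
move=> l; have [C1 [d1 [d10 H1]]] := L1 (w :: w :: l).
exists C1, d1; split => // dt dt0 dtd p.
have sr := s1 _ dt0.
rewrite smooth_Dseq_sub; first last.
- by apply: smooth_sub; [apply: smooth_trans|].
- by apply: smooth_scale; apply: smooth_D.
rewrite smooth_Dseq_sub //; last by apply: smooth_trans.
rewrite smooth_Dseq_scale; last by apply: smooth_D.
rewrite Dseq_trans Dseq_D_comm // distrC expr2 mulrA.
apply: taylor2; [exact: smooth_Dseq sr|exact: ltW|].
move=> q; have := H1 dt dt0 dtd q; by rewrite expr0 mulr1.
Qed.

End GoodS.

Set Implicit Arguments. Unset Strict Implicit.

Section Alg.
Context {R : realType}.

Lemma mx_inv_sum n (A B : 'M[R]_n) (x : 'I_n -> R) k : A *m B = 1%:M ->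
  \sum_(j < n) A k j * \sum_(i < n) B j i * x i = x k.
Proof.
move=> AB.
have -> : \sum_(j < n) A k j * \sum_(i < n) B j i * x i
          = \sum_(i < n) (A *m B) k i * x i.
  rewrite (eq_bigr (fun j => \sum_(i < n) A k j * (B j i * x i))); last first.
    by move=> j _; rewrite mulr_sumr.
  rewrite exchange_big /=; apply: eq_bigr => i _; rewrite mxE mulr_suml.
  by apply: eq_bigr => j _; rewrite mulrA.
rewrite AB (bigD1 k) //= big1 ?addr0; first by rewrite !mxE eqxx mulr1n mul1r.
by move=> i /negbTE ik; rewrite !mxE eq_sym ik mulr0n mul0r.
Qed.

Lemma pair_fst n d (F : 'I_n -> @ST R d) : (\sum_(i < n) F i).1 = \sum_(i < n) (F i).1.
Proof. by apply: (big_morph fst). Qed.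
Lemma pair_snd n d (F : 'I_n -> @ST R d) : (\sum_(i < n) F i).2 = \sum_(i < n) (F i).2.
Proof. by apply: (big_morph snd). Qed.
Lemma scale_pair d (v : 'rV[R]_d) (a c : R) : c *: ((v, a) : @ST R d) = (c *: v, c * a).
Proof. by []. Qed.

Lemma w_decomp d (v : 'rV[R]_d) :
  ((v, 1) : @ST R d) = ((0 : 'rV_d), 1) + \sum_(b < d) (v 0 b) *: ((delta_mx 0 b : 'rV_d), 0 : R).
Proof.
rewrite [\sum_(b < d) _]surjective_pairing pair_fst pair_snd /=.
have -> : \sum_(i < d) ((v 0 i) *: ((delta_mx 0 i : 'rV_d), 0 : R)).2 = 0.
  by apply: big1 => i _ /=; rewrite [_ *: _]mulr0.
rewrite -row_sum_delta.
have -> : (((0 : 'rV_d), (1 : R)) : @ST R d) + (v, 0) = (0 + v, 1 + 0) by [].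
by rewrite add0r addr0.
Qed.

Lemma T_eq d (g : @ST R d -> R) (v : 'rV[R]_d) p : differentiable g p ->
  dT g p + \sum_(b < d) v 0 b * dX b g p = 'D_(((v, 1) : @ST R d)) g p.
Proof.
move=> dg; rewrite /dT /dX !deriveE //.
under eq_bigr do rewrite deriveE //.
rewrite w_decomp linearD linear_sum /=; congr (_ + _).
by apply: eq_bigr => b _; rewrite linearZ.
Qed.
End Alg.

Set Implicit Arguments. Unset Strict Implicit.

Section Fixed.
Context {R : realType} (d J : nat) (hJ : (d <= J)%N)
  (lam : R) (e : 'I_J.+1 -> 'rV[R]_d) (M : 'M[R]_J.+1)
  (G : 'rV[R]_d.+1 -> 'I_J.+1 -> R) (s : 'I_J.+1 -> R)
  (hMinv : M \in unitmx)
  (hM0 : forall j : 'I_J.+1, M ord0 j = 1)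
  (hMa : forall (a : 'I_d) (j : 'I_J.+1), M (inord a.+1) j = (vel lam e j) 0 a)
  (hG0 : forall w : 'rV[R]_d.+1, \sum_(j < J.+1) G w j = w 0 0)
  (hGa : forall (w : 'rV[R]_d.+1) (a : 'I_d),
      \sum_(j < J.+1) (vel lam e j) 0 a * G w j = w 0 (inord a.+1))
  (hs : forall k : 'I_J.+1, (d < k)%N -> 0 < s k <= 2).
Local Notation V := (@ST R d).
Implicit Types (j k : 'I_J.+1) (p : V).

Definition wv (j : 'I_J.+1) : V := (vel lam e j, 1).
Definition cc (j k : 'I_J.+1) : R := if (d < k)%N then invmx M j k / s k else 0.

Lemma MMinv (x : 'I_J.+1 -> R) k : \sum_j M k j * \sum_i invmx M j i * x i = x k.
Proof. by apply: mx_inv_sum; apply: mulmxV. Qed.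
Lemma MinvM (x : 'I_J.+1 -> R) k : \sum_j invmx M k j * \sum_i M j i * x i = x k.
Proof. by apply: mx_inv_sum; apply: mulVmx. Qed.

Lemma s_neq0 (k : 'I_J.+1) : (d < k)%N -> s k != 0.
Proof. by move=> /hs /andP [h _]; rewrite gt_eqF. Qed.

Variables (dt : R) (fd : 'I_J.+1 -> V -> R).
Hypothesis hsch : scheme lam e M G s dt fd.

Lemma fstarE j p : fstar M G s fd j p = fd j (p + dt *: wv j).
Proof.
case: p => y t; have := hsch j (y + dt *: vel lam e j) t.
rewrite addrK => <-; congr fd.
rewrite /wv scale_pair mulr1.
by [].
Qed.

Lemma mstarE k p : mstar M G s fd k p = \sum_j M k j * fd j (p + dt *: wv j).
Proof.
rewrite -[LHS](MMinv (fun k => mstar M G s fd k p)).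
by apply: eq_bigr => j _; rewrite -fstarE.
Qed.

Lemma f_from_mom j p : fd j p = \sum_k invmx M j k * mom M fd k p.
Proof. by rewrite /mom MinvM. Qed.

Lemma feq_from_meq j p : feq M G fd j p = \sum_k invmx M j k * meq M G fd k p.
Proof. by rewrite /meq MinvM. Qed.

Lemma meq_cons k p : (k <= d)%N -> meq M G fd k p = mom M fd k p.
Proof.
case: k => [[|a] ha] hk.
  have -> : Ordinal ha = ord0 by apply: val_inj.
  rewrite /meq; under eq_bigr do rewrite hM0 mul1r.
  rewrite /feq hG0 /Wof mxE.
  congr mom; apply: val_inj => /=; rewrite inordK //.
have hk' : (a < d)%N by [].
pose a' : 'I_d := Ordinal hk'.
have -> : Ordinal ha = inord a'.+1 by apply: val_inj => /=; rewrite inordK.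
rewrite /meq; under eq_bigr do rewrite hMa.
rewrite /feq hGa /Wof mxE.
congr mom; apply: val_inj => /=; rewrite !inordK //.
Qed.

Lemma DlE k p : mstar M G s fd k p - mom M fd k p
   = \sum_l M k l * (fd l (p + dt *: wv l) - fd l p).
Proof. by rewrite mstarE /mom -sumrB; apply: eq_bigr => l _; rewrite mulrBr. Qed.

Lemma mstar_gt k p : (d < k)%N ->
  mstar M G s fd k p = (1 - s k) * mom M fd k p + s k * meq M G fd k p.
Proof. by move=> hk; rewrite /mstar leqNgt hk. Qed.

Lemma mstar_le k p : (k <= d)%N -> mstar M G s fd k p = mom M fd k p.
Proof. by move=> hk; rewrite /mstar hk. Qed.

Lemma meq_gt k p : (d < k)%N -> meq M G fd k p = mom M fd k p
   + (\sum_l M k l * (fd l (p + dt *: wv l) - fd l p)) / s k.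
Proof.
move=> hk; rewrite -DlE mstar_gt //.
have := s_neq0 hk => sk; by field.
Qed.

Definition fe j p := fd j p
  + \sum_k cc j k * \sum_l M k l * (fd l (p + dt *: wv l) - fd l p).

Lemma feqE j p : feq M G fd j p = fe j p.
Proof.
rewrite feq_from_meq /fe (f_from_mom j p) -big_split /=; apply: eq_bigr => k _.
rewrite /cc; case: ltnP => hk.
  by rewrite meq_gt //; ring.
by rewrite meq_cons // mul0r addr0.
Qed.

Hypothesis hsm : forall j, smooth (fd j).

Lemma smooth_Dl l : smooth (fun p => fd l (p + dt *: wv l) - fd l p).
Proof. by apply: smooth_sub => //; apply: smooth_trans. Qed.

Lemma smooth_r j : smooth (fun p =>
   \sum_k cc j k * \sum_l M k l * (fd l (p + dt *: wv l) - fd l p)).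
Proof.
apply: smooth_sum => k; apply: smooth_scale; apply: smooth_sum => l.
apply: smooth_scale; exact: smooth_Dl.
Qed.

Lemma smooth_fe j : smooth (fe j).
Proof. by apply: smooth_add => //; apply: smooth_r. Qed.

Lemma feq_fun j : feq M G fd j = fe j.
Proof. by apply/funext => q; apply: feqE. Qed.

Lemma thetaE k : theta lam e M G fd k = fun p => \sum_j M k j * 'D_(wv j) (fe j) p.
Proof.
apply/funext => p; rewrite /theta; apply: eq_bigr => j _; congr (_ * _).
rewrite feq_fun; apply: T_eq; exact: smooth_diff (smooth_fe j).
Qed.

Lemma fstar_fun j : fstar M G s fd j = fun p => fd j (p + dt *: wv j).
Proof. by apply/funext => q; apply: fstarE. Qed.

End Fixed.

Set Implicit Arguments. Unset Strict Implicit.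

Section Main.
Context {R : realType} (d J : nat) (hJ : (d <= J)%N)
  (lam : R) (e : 'I_J.+1 -> 'rV[R]_d) (M : 'M[R]_J.+1)
  (G : 'rV[R]_d.+1 -> 'I_J.+1 -> R) (s : 'I_J.+1 -> R)
  (hMinv : M \in unitmx)
  (hM0 : forall j : 'I_J.+1, M ord0 j = 1)
  (hMa : forall (a : 'I_d) (j : 'I_J.+1), M (inord a.+1) j = (vel lam e j) 0 a)
  (hG0 : forall w : 'rV[R]_d.+1, \sum_(j < J.+1) G w j = w 0 0)
  (hGa : forall (w : 'rV[R]_d.+1) (a : 'I_d),
      \sum_(j < J.+1) (vel lam e j) 0 a * G w j = w 0 (inord a.+1))
  (hs : forall k : 'I_J.+1, (d < k)%N -> 0 < s k <= 2)
  (f : R -> 'I_J.+1 -> ST d -> R)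
  (hscheme : forall dt : R, 0 < dt -> scheme lam e M G s dt (f dt))
  (hfsmooth : forall (dt : R) (j : 'I_J.+1), 0 < dt -> smooth (f dt j))
  (hfbound : forall j : 'I_J.+1, LBMO 0 (fun dt => f dt j)).
Local Notation V := (@ST R d).
Implicit Types (j k : 'I_J.+1) (p : V).

Lemma Gf j : Good 0 (fun dt => f dt j).
Proof. by split; [move=> dt dt0; exact: hfsmooth|exact: hfbound]. Qed.

Definition rr j dt p := \sum_k cc d M s j k *
   \sum_l M k l * (f dt l (p + dt *: wv lam e l) - f dt l p).

Lemma Good_rr j : Good 1 (rr j).
Proof.
apply: Good_sum => k; apply: Good_scale; apply: Good_sum => l; apply: Good_scale.
exact: Good1_diff (Gf l).
Qed.

Lemma Good_E1 k : (d < k)%N -> Good 2 (fun dt p => mom M (f dt) k p - meq M G (f dt) k p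
                         + dt / s k * theta lam e M G (f dt) k p).
Proof.
move=> hk.
have H1 := Good_scale (1 / s k) (Good_sum (fun j => Good_scale (M k j)
              (Good2_taylor (wv lam e j) (Gf j)))).
have H2 := Good_scale (1 / s k) (Good_dt (Good_sum (fun j => Good_scale (M k j)
              (Good_D (wv lam e j) (Good_rr j))))).
apply: (Good_ext _ (Good_add H1 H2)) => dt dt0 /=.
have hsch := hscheme dt0.
have hsm : forall j, smooth (f dt j) by move=> j; apply: hfsmooth.
rewrite (thetaE hMinv hM0 hMa hG0 hGa hs hsch hsm).
apply/funext => p.
rewrite (meq_gt hMinv hs hsch p hk).
have Dfe j q : 'D_(wv lam e j) (fe lam e M s dt (f dt) j) q
    = 'D_(wv lam e j) (f dt j) q + 'D_(wv lam e j) (rr j dt) q.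
  have := (smooth_Dseq_add _ _ [:: wv lam e j] (hsm j) (smooth_r lam e M s dt hsm j)).
  by move/(congr1 (fun g => g q)).
have eth : \sum_j M k j * 'D_(wv lam e j) (fe lam e M s dt (f dt) j) p
   = \sum_j M k j * 'D_(wv lam e j) (f dt j) p + \sum_j M k j * 'D_(wv lam e j) (rr j dt) p.
  by rewrite -big_split; apply: eq_bigr => j _; rewrite Dfe mulrDr.
have eT : \sum_j M k j * (dt * 'D_(wv lam e j) (f dt j) p
      - (f dt j (p + dt *: wv lam e j) - f dt j p))
   = dt * \sum_j M k j * 'D_(wv lam e j) (f dt j) p
      - \sum_j M k j * (f dt j (p + dt *: wv lam e j) - f dt j p).
  rewrite mulr_sumr -sumrB; apply: eq_bigr => j _; by rewrite mulrBr mulrCA.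
rewrite eth eT.
have sk := s_neq0 hs hk.
by field.
Qed.

Lemma Good_E2 k : (d < k)%N -> Good 2 (fun dt p => mstar M G s (f dt) k p - meq M G (f dt) k p
                         + (1 / s k - 1) * dt * theta lam e M G (f dt) k p).
Proof.
move=> hk; apply: (Good_ext _ (Good_scale (1 - s k) (Good_E1 hk))) => dt dt0 /=.
apply/funext => p; rewrite /mstar leqNgt hk /=.
have sk := s_neq0 hs hk.
by field.
Qed.

Lemma D_add (F H : V -> R) u p : smooth F -> smooth H ->
  'D_u (fun p => F p + H p) p = 'D_u F p + 'D_u H p.
Proof. by move=> sF sH; have := (smooth_Dseq_add F H [:: u] sF sH); move/(congr1 (fun g => g p)). Qed.
Lemma D_sub (F H : V -> R) u p : smooth F -> smooth H ->
  'D_u (fun p => F p - H p) p = 'D_u F p - 'D_u H p.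
Proof. by move=> sF sH; have := (smooth_Dseq_sub F H [:: u] sF sH); move/(congr1 (fun g => g p)). Qed.
Lemma D_scale (F : V -> R) c u p : smooth F ->
  'D_u (fun p => c * F p) p = c * 'D_u F p.
Proof. by move=> sF; have := (smooth_Dseq_scale F c [:: u] sF); move/(congr1 (fun g => g p)). Qed.
Lemma D_sum n (Fs : 'I_n -> V -> R) u p : (forall i, smooth (Fs i)) ->
  'D_u (fun p => \sum_(i < n) Fs i p) p = \sum_(i < n) 'D_u (Fs i) p.
Proof. by move=> sF; have := (smooth_Dseq_sum n Fs [:: u] sF); move/(congr1 (fun g => g p)). Qed.
Lemma smooth_if (b : bool) c (F : V -> R) : smooth F ->
  smooth (fun p => if b then c * F p else 0).
Proof. by case: b => sF; [apply: smooth_scale|apply: smooth_cst]. Qed.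
Lemma D_if (b : bool) c (F : V -> R) u p : smooth F ->
  'D_u (fun p => if b then c * F p else 0) p = if b then c * 'D_u F p else 0.
Proof.
case: b => sF; first exact: D_scale.
by have := (Dseq_cst [:: u] (0 : R)); move/(congr1 (fun g => g p)).
Qed.

Definition Phi j dt p := fstar M G s (f dt) j p - feq M G (f dt) j p
  + dt * \sum_(k < J.+1) (if (d < k)%N then (1 / s k - 1) * invmx M j k * theta lam e M G (f dt) k p
                 else 0).

Lemma Good_Phi j : Good 2 (Phi j).
Proof.
have Gk k : Good 2 (fun dt p => if (d < k)%N then invmx M j k *
     (mstar M G s (f dt) k p - meq M G (f dt) k p
                         + (1 / s k - 1) * dt * theta lam e M G (f dt) k p) else 0).
  case: (ltnP d k) => hk; first exact: (Good_scale (invmx M j k) (Good_E2 hk)).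
  exact: Good_zero.
apply: (Good_ext _ (Good_sum Gk)) => dt dt0 /=; apply/funext => p.
rewrite /Phi /fstar (feq_from_meq G hMinv) mulr_sumr -sumrB -big_split /=.
apply: eq_bigr => k _; case: (ltnP d k) => hk.
  rewrite /=; ring.
rewrite (mstar_le M G s (f dt) p hk) (meq_cons hM0 hMa hG0 hGa (f dt) p hk).
by rewrite subrr mulr0 addr0.
Qed.

Lemma Good_claim3 j b : Good 2 (fun dt p =>
     dX b (fstar M G s (f dt) j) p - dX b (feq M G (f dt) j) p
        + dt * \sum_(k < J.+1 | (d < k)%N)
                 (1 / s k - 1) * invmx M j k * dX b (theta lam e M G (f dt) k) p).
Proof.
set u : V := ((delta_mx 0 b : 'rV_d), (0 : R)).
apply: (Good_ext _ (Good_D u (Good_Phi j))) => dt dt0 /=.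
have hsch := hscheme dt0.
have hsm : forall j, smooth (f dt j) by move=> j'; apply: hfsmooth.
have sfs : smooth (fstar M G s (f dt) j).
  rewrite (fstar_fun hsch); apply: smooth_trans; exact: hsm.
have sfe : smooth (feq M G (f dt) j).
  rewrite (feq_fun hMinv hM0 hMa hG0 hGa hs hsch); exact: smooth_fe.
have sth k : smooth (theta lam e M G (f dt) k).
  rewrite (thetaE hMinv hM0 hMa hG0 hGa hs hsch hsm).
  apply: smooth_sum => j'; apply: smooth_scale; apply: smooth_D; exact: smooth_fe.
have sif k : smooth (fun p => if (d < k)%N then (1 / s k - 1) * invmx M j k *
          theta lam e M G (f dt) k p else 0).
  have := smooth_if (d < k)%N ((1 / s k - 1) * invmx M j k) (sth k).
  by [].
rewrite /Phi; apply/funext => p.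
rewrite (D_add u p (smooth_sub _ _ sfs sfe) (smooth_scale _ dt (smooth_sum _ _ sif))).
rewrite (D_sub u p sfs sfe) (D_scale dt u p (smooth_sum _ _ sif)) (D_sum u p sif).
rewrite big_mkcond /=; congr (_ + _ * _).
rewrite [RHS]big_mkcond; apply: eq_bigr => k _.
rewrite (D_if (d < k)%N ((1 / s k - 1) * invmx M j k) u p (sth k)).
reflexivity.
Qed.

End Main.

Unset Implicit Arguments.
Local Close Scope classical_set_scope.
Local Open Scope ring_scope.

Theorem proposition5 (R : realType) (d J : nat) (hd : (1 <= d)%N) (hJ : (d <= J)%N)
  (lam : R) (hlam : 0 < lam) (e : 'I_J.+1 -> 'rV[R]_d) (M : 'M[R]_J.+1)
  (G : 'rV[R]_d.+1 -> 'I_J.+1 -> R) (s : 'I_J.+1 -> R)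
  (hMinv : M \in unitmx)
  (hM0 : forall j : 'I_J.+1, M ord0 j = 1)
  (hMa : forall (a : 'I_d) (j : 'I_J.+1), M (inord a.+1) j = (vel lam e j) 0 a)
  (hGsmooth : forall j : 'I_J.+1, smooth (fun w => G w j))
  (hG0 : forall w : 'rV[R]_d.+1, \sum_(j < J.+1) G w j = w 0 0)
  (hGa : forall (w : 'rV[R]_d.+1) (a : 'I_d),
      \sum_(j < J.+1) (vel lam e j) 0 a * G w j = w 0 (inord a.+1))
  (hs : forall k : 'I_J.+1, (d < k)%N -> 0 < s k <= 2)
  (f : R -> 'I_J.+1 -> ST d -> R)
  (hscheme : forall dt : R, 0 < dt -> scheme lam e M G s dt (f dt))
  (hfsmooth : forall (dt : R) (j : 'I_J.+1), 0 < dt -> smooth (f dt j))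
  (hfbound : forall j : 'I_J.+1, LBMO 0 (fun dt => f dt j)) :
  (forall k : 'I_J.+1, (d < k)%N ->
     LBMO 2 (fun dt p => mom M (f dt) k p - meq M G (f dt) k p
                         + dt / s k * theta lam e M G (f dt) k p))
  /\ (forall k : 'I_J.+1, (d < k)%N ->
     LBMO 2 (fun dt p => mstar M G s (f dt) k p - meq M G (f dt) k p
                         + (1 / s k - 1) * dt * theta lam e M G (f dt) k p))
  /\ (forall (j : 'I_J.+1) (b : 'I_d),
     LBMO 2 (fun dt p => dX b (fstar M G s (f dt) j) p - dX b (feq M G (f dt) j) p
        + dt * \sum_(k < J.+1 | (d < k)%N)
                 (1 / s k - 1) * invmx M j k * dX b (theta lam e M G (f dt) k) p)).
Proof.
split; [|split].
- move=> k hk.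
  exact: (Good_E1 hMinv hM0 hMa hG0 hGa hs hscheme hfsmooth hfbound hk).2.
- move=> k hk.
  exact: (Good_E2 hMinv hM0 hMa hG0 hGa hs hscheme hfsmooth hfbound hk).2.
- move=> j b.
  exact: (Good_claim3 hMinv hM0 hMa hG0 hGa hs hscheme hfsmooth hfbound j b).2.
Qed.
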